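(* Let $\lambda$ be a singular cardinal of countable cofinality, $\kappa>\lambda$ a regular cardinal, and $X=(f_\alpha)_{\alpha<\kappa}$ a $\kappa$-scale for $T_\lambda$. Let $T$ be the down-closure of $X$ in $T_\lambda$ (a $\lambda$-tree with tops $X$). Then for every $T$-graph $G'$, the bipartite graph with bipartition classes $T^{<\omega}$ and $X$ formed by the edges of $G'$ between these sets is a $(\lambda,\kappa)$-graph that has no $(\aleph_0,\kappa)$-subgraph.
   Context: $T_\lambda$ is the order tree of all sequences of elements of $\lambda$ of length at most $\omega$, ordered by initial segment; its elements of length $\omega$ are called tops; $T^{<\omega}$ denotes the finite sequences in $T$. An ideal on $\mathbb{N}$ is a proper subset of $\mathcal{P}(\mathbb{N})$ containing $\emptyset$ and closed under finite unions and subsets. For an ideal $I$ and $f,g:\mathbb{N}\to\lambda$, write $f<_I g$ if $\{n : f(n)\ge g(n)\}\in I$. A $\kappa$-scale for $T_\lambda$ is a family $(f_\alpha)_{\alpha<\kappa}$ of tops for which there exist a strictly increasing sequence $(\lambda_n)_{n\in\mathbb{N}}$ of uncountable regular cardinals with supremum $\lambda$ such that $f_\alpha(n)<\lambda_n$ for all $\alpha,n$, and an ideal $I$ on $\mathbb{N}$ containing all finite sets, such that $f_\alpha<_I f_\beta$ whenever $\alpha<\beta<\kappa$, and for every $g\in\prod_n\lambda_n$ there is $\alpha<\kappa$ with $g<_I f_\alpha$. A $T$-graph is a graph with vertex set $T$ whose edges join comparable points and in which for every $t$ the neighbours of $t$ below $t$ are cofinal in $\{s : s<t\}$. For infinite cardinals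 $\lambda'<\kappa$, a $(\lambda',\kappa)$-graph is a bipartite graph $(A,B)$ with $|A|=\lambda'$, $|B|=\kappa$, each $b\in B$ having infinitely many neighbours in $A$; an $(\aleph_0,\kappa)$-subgraph of $(A,B)$ is a subgraph $(C,D)$ with $C\subseteq A$, $D\subseteq B$ that is an $(\aleph_0,\kappa)$-graph. *)

(* Defs.v *)
From Stdlib Require Import List.
Import ListNotations.
Set Implicit Arguments.

Definition full (X : Type) : X -> Prop := fun _ => True.
Arguments full X _ : clear implicits.

Definition finite_set {X : Type} (A : X -> Prop) : Prop :=
  exists l : list X, forall x, A x -> In x l.

Definition card_le {X Y : Type} (A : X -> Prop) (B : Y -> Prop) : Prop :=
  exists f : X -> Y, (forall x, A x -> B (f x)) /\
    (forall x y, A x -> A y -> f x = f y -> x = y).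

Definition card_lt {X Y : Type} (A : X -> Prop) (B : Y -> Prop) : Prop :=
  card_le A B /\ ~ card_le B A.

Definition equipotent {X Y : Type} (A : X -> Prop) (B : Y -> Prop) : Prop :=
  exists f : X -> Y, (forall x, A x -> B (f x)) /\
    (forall x y, A x -> A y -> f x = f y -> x = y) /\
    (forall y, B y -> exists x, A x /\ f x = y).

Definition strict_wellorder {T : Type} (lt : T -> T -> Prop) : Prop :=
  (forall x, ~ lt x x) /\
  (forall x y z, lt x y -> lt y z -> lt x z) /\
  (forall x y, lt x y \/ x = y \/ lt y x) /\
  well_founded lt.

(* the well-ordered type (T,lt) is an initial ordinal, i.e. a cardinal:
   every proper initial segment has strictly smaller cardinality *)
Definition is_cardinal_type {T : Type} (lt : T -> T -> Prop) : Prop :=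
  strict_wellorder lt /\ forall x, card_lt (fun y => lt y x) (full T).

Definition cofinal {T : Type} (lt : T -> T -> Prop) (S : T -> Prop) : Prop :=
  forall x, exists s, S s /\ (x = s \/ lt x s).

Definition regular_type {T : Type} (lt : T -> T -> Prop) : Prop :=
  ~ finite_set (full T) /\
  forall S : T -> Prop, cofinal lt S -> equipotent S (full T).

Definition singular_type {T : Type} (lt : T -> T -> Prop) : Prop :=
  ~ finite_set (full T) /\
  exists S : T -> Prop, cofinal lt S /\ card_lt S (full T).

Definition countable_cofinality {T : Type} (lt : T -> T -> Prop) : Prop :=
  (exists S : T -> Prop, cofinal lt S /\ equipotent S (full nat)) /\
  (forall S : T -> Prop, cofinal lt S -> card_le (full nat) S).

(** Ordinals below lambda are elements of the well-ordered type L;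
    the ordinal c is identified with its initial segment. *)
Definition segment {T : Type} (lt : T -> T -> Prop) (c : T) : T -> Prop :=
  fun x => lt x c.

Definition is_cardinal_elem {T : Type} (lt : T -> T -> Prop) (c : T) : Prop :=
  forall d, lt d c -> card_lt (segment lt d) (segment lt c).

Definition regular_elem {T : Type} (lt : T -> T -> Prop) (c : T) : Prop :=
  ~ finite_set (segment lt c) /\
  forall S : T -> Prop, (forall s, S s -> lt s c) ->
    (forall x, lt x c -> exists s, S s /\ (x = s \/ lt x s)) ->
    equipotent S (segment lt c).

Definition uncountable_elem {T : Type} (lt : T -> T -> Prop) (c : T) : Prop :=
  ~ card_le (segment lt c) (full nat).

Definition ideal_on_nat (I : (nat -> Prop) -> Prop) : Prop :=
  (exists A, ~ I A) /\
  I (fun _ => False) /\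
  (forall A B, I A -> I B -> I (fun n => A n \/ B n)) /\
  (forall A B, I A -> (forall n, B n -> A n) -> I B).

Definition lt_mod {L : Type} (ltL : L -> L -> Prop) (I : (nat -> Prop) -> Prop)
  (f g : nat -> L) : Prop :=
  I (fun n => ~ ltL (f n) (g n)).

(** * kappa-scales for T_lambda; tops are functions nat -> L,
    the family (f_alpha)_{alpha<kappa} is f : K -> nat -> L *)
Definition kappa_scale {L K : Type} (ltL : L -> L -> Prop) (ltK : K -> K -> Prop)
  (f : K -> nat -> L) : Prop :=
  exists (lam : nat -> L) (I : (nat -> Prop) -> Prop),
    (forall n, ltL (lam n) (lam (S n))) /\
    (forall x, exists n, ltL x (lam n)) /\
    (forall n, is_cardinal_elem ltL (lam n) /\ regular_elem ltL (lam n) /\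
               uncountable_elem ltL (lam n)) /\
    (forall a n, ltL (f a n) (lam n)) /\
    ideal_on_nat I /\
    (forall F, finite_set F -> I F) /\
    (forall a b, ltK a b -> lt_mod ltL I (f a) (f b)) /\
    (forall g : nat -> L, (forall n, ltL (g n) (lam n)) ->
       exists a, lt_mod ltL I g (f a)).

(** * The tree T_lambda: nodes are finite sequences or tops *)
Definition node (L : Type) : Type := (list L + (nat -> L))%type.

Fixpoint pre {L : Type} (f : nat -> L) (k : nat) : list L :=
  match k with
  | O => []
  | S k' => pre f k' ++ [f k']
  end.

Definition tlt {L : Type} (u v : node L) : Prop :=
  match u, v with
  | inl s, inl t => exists w, w <> [] /\ t = s ++ w
  | inl s, inr g => s = pre g (length s)
  | inr _, _ => False
  end.

Definition downclosure {L K : Type} (f : K -> nat -> L) (t : node L) : Prop :=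
  (exists a, t = inr (f a)) \/ (exists a, tlt t (inr (f a))).

Definition finite_part {L K : Type} (f : K -> nat -> L) (t : node L) : Prop :=
  downclosure f t /\ exists s, t = inl s.

Definition tops_of {L K : Type} (f : K -> nat -> L) (t : node L) : Prop :=
  exists a, t = inr (f a).

Definition T_graph {L : Type} (T : node L -> Prop) (E : node L -> node L -> Prop) : Prop :=
  (forall u v, E u v -> E v u) /\
  (forall u v, E u v -> T u /\ T v) /\
  (forall u v, E u v -> tlt u v \/ tlt v u) /\
  (forall t, T t -> forall s, tlt s t ->
     exists u, (u = s \/ tlt s u) /\ tlt u t /\ E u t).

(* (P,Q)-graph where the cardinals are given as the sets CP, CQ *)
Definition card_graph {V P Q : Type} (CP : P -> Prop) (CQ : Q -> Prop)
  (A B : V -> Prop) (E : V -> V -> Prop) : Prop :=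
  (forall a b, E a b -> A a /\ B b) /\
  equipotent A CP /\ equipotent B CQ /\
  (forall b, B b -> ~ finite_set (fun a => A a /\ E a b)).

Definition has_aleph0_kappa_subgraph {V K : Type} (CK : K -> Prop)
  (A B : V -> Prop) (E : V -> V -> Prop) : Prop :=
  exists (C D : V -> Prop) (E' : V -> V -> Prop),
    (forall a, C a -> A a) /\ (forall b, D b -> B b) /\
    (forall a b, E' a b -> E a b) /\
    card_graph (full nat) CK C D E'.

(* Main.v *)
Require Import Defs.
From Stdlib Require Import List Arith Lia Classical ClassicalEpsilon Cantor.
From mathcomp Require classical_sets.
Import ListNotations.

Lemma card_le_trans {X Y Z} (A : X->Prop) (B : Y->Prop) (C : Z->Prop) :
  card_le A B -> card_le B C -> card_le A C.
Proof.
  intros [f [Hf1 Hf2]] [g [Hg1 Hg2]]. exists (fun x => g (f x)). split.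
  - intros x Hx. apply Hg1, Hf1, Hx.
  - intros x y Hx Hy H. apply Hf2; auto.
Qed.

Lemma card_le_sub {X} (A B : X -> Prop) : (forall x, A x -> B x) -> card_le A B.
Proof. intros H. exists (fun x => x). split; auto. Qed.

Lemma equi_le {X Y} (A : X->Prop) (B : Y->Prop) : equipotent A B -> card_le A B.
Proof. intros [f [H1 [H2 _]]]. exists f; auto. Qed.

Lemma equi_ge {X Y} (A : X->Prop) (B : Y->Prop) (x0 : X) : equipotent A B -> card_le B A.
Proof.
  intros [f [H1 [H2 H3]]].
  assert (H : forall y, exists x, B y -> A x /\ f x = y).
  { intros y. destruct (classic (B y)) as [Hy|Hy].
    - destruct (H3 y Hy) as [x Hx]. exists x; auto.
    - exists x0. intros; contradiction. }
  destruct (choice _ H) as [g Hg].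
  exists g. split.
  - intros y Hy. apply (Hg y Hy).
  - intros y y' Hy Hy' E. destruct (Hg y Hy) as [_ E1]. destruct (Hg y' Hy') as [_ E2].
    rewrite <- E1, <- E2, E. reflexivity.
Qed.

Lemma CB {X Y} (A : X->Prop) (B : Y->Prop) :
  card_le A B -> card_le B A -> equipotent A B.
Proof.
  intros [f [Hf1 Hf2]] [g [Hg1 Hg2]].
  pose (C := fix C (n : nat) : X -> Prop := match n with
      | O => fun x => A x /\ ~ exists y, B y /\ g y = x
      | S n => fun x => exists x', C n x' /\ x = g (f x') end).
  pose (CC := fun x => exists n, C n x).
  assert (CA : forall n x, C n x -> A x).
  { induction n; simpl; intros x Hx. tauto. destruct Hx as [x' [H1 H2]]. subst.
    apply Hg1, Hf1, (IHn _ H1). }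
  assert (Hinv : forall x, exists y, (A x /\ ~ CC x) -> B y /\ g y = x).
  { intros x. destruct (classic (exists y, B y /\ g y = x)) as [[y Hy]|Hn].
    - exists y; auto.
    - exists (f x). intros [HA HC]. exfalso. apply HC. exists 0. simpl. auto. }
  destruct (choice _ Hinv) as [gi Hgi].
  exists (fun x => if excluded_middle_informative (CC x) then f x else gi x).
  split; [|split].
  - intros x Hx. destruct (excluded_middle_informative (CC x)). apply Hf1; auto.
    apply (Hgi x); auto.
  - intros x x' Hx Hx'.
    destruct (excluded_middle_informative (CC x)) as [c|c];
    destruct (excluded_middle_informative (CC x')) as [c'|c'].
    + apply Hf2; auto.
    + intros E. exfalso. destruct (Hgi x' (conj Hx' c')) as [Hb Hg]. apply c'.
      destruct c as [n Hn]. exists (S n). simpl. exists x. split; auto.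
      rewrite <- Hg, E. reflexivity.
    + intros E. exfalso. destruct (Hgi x (conj Hx c)) as [Hb Hg]. apply c.
      destruct c' as [n Hn]. exists (S n). simpl. exists x'. split; auto.
      rewrite <- Hg, E. reflexivity.
    + intros E. destruct (Hgi x (conj Hx c)) as [_ G1].
      destruct (Hgi x' (conj Hx' c')) as [_ G2]. rewrite <- G1, <- G2, E. reflexivity.
  - intros y Hy. destruct (classic (CC (g y))) as [c|c].
    + destruct c as [n Hn]. destruct n as [|n].
      * simpl in Hn. exfalso. apply (proj2 Hn). exists y; auto.
      * simpl in Hn. destruct Hn as [x' [H1 H2]].
        assert (y = f x') by (apply Hg2; auto; apply Hf1, (CA _ _ H1)).
        exists x'. split. apply (CA _ _ H1).
        destruct (excluded_middle_informative (CC x')) as [c'|c']. auto.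
        exfalso; apply c'; exists n; auto.
    + exists (g y). split. apply Hg1; auto.
      destruct (excluded_middle_informative (CC (g y))). contradiction.
      destruct (Hgi (g y) (conj (Hg1 y Hy) c)) as [Hb E]. apply Hg2; auto.
Qed.

Lemma zorn_sets (T : Type) (P : (T -> Prop) -> Prop) :
  (forall F : (T->Prop) -> Prop, (forall X, F X -> P X) ->
     (forall X Y, F X -> F Y -> (forall t, X t -> Y t) \/ (forall t, Y t -> X t)) ->
     P (fun t => exists2 X, F X & X t)) ->
  exists M, P M /\ forall N, (forall t, M t -> N t) -> P N -> forall t, N t -> M t.
Proof.
  intros H. destruct (@classical_sets.Zorn_bigcup T P) as [M [HM Hmax]].
  - intros F HF Htot. apply H; auto.
  - exists M. split; auto. intros N HMN HN. apply NNPP. intros Hc.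
    apply (Hmax N); auto. split; auto.
Qed.

Lemma compar {T} (X : T -> Prop) (Y : T -> Prop) (t0 : T) :
  card_le X Y \/ card_le Y X.
Proof.
  set (P := fun r : T*T -> Prop =>
     (forall p, r p -> X (fst p) /\ Y (snd p)) /\
     (forall x y y', r (x,y) -> r (x,y') -> y = y') /\
     (forall x x' y, r (x,y) -> r (x',y) -> x = x')).
  destruct (zorn_sets _ P) as [M [[M1 [M2 M3]] Mmax]].
  - intros F HF Htot. split; [|split].
    + intros p [R HR Rp]. apply (HF R HR); auto.
    + intros x y y' [R HR Rp] [R' HR' Rp']. destruct (Htot R R' HR HR') as [S|S].
      * apply (proj1 (proj2 (HF R' HR')) x); auto.
      * apply (proj1 (proj2 (HF R HR)) x); auto.
    + intros x x' y [R HR Rp] [R' HR' Rp']. destruct (Htot R R' HR HR') as [S|S].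
      * apply (proj2 (proj2 (HF R' HR')) x x' y); auto.
      * apply (proj2 (proj2 (HF R HR)) x x' y); auto.
  - destruct (classic (forall x, X x -> exists y, M (x,y))) as [Hd|Hd].
    + left.
      assert (H : forall x, exists y, X x -> M (x,y)).
      { intros x. destruct (classic (X x)) as [Hx|Hx].
        destruct (Hd x Hx) as [y Hy]. exists y; auto. exists t0; tauto. }
      destruct (choice _ H) as [h Hh]. exists h. split.
      * intros x Hx. apply (M1 _ (Hh x Hx)).
      * intros x x' Hx Hx' E. apply (M3 x x' (h x)); auto. rewrite E; auto.
    + destruct (classic (forall y, Y y -> exists x, M (x,y))) as [Hr|Hr].
      * right.
        assert (H : forall y, exists x, Y y -> M (x,y)).
        { intros y. destruct (classic (Y y)) as [Hy|Hy].
          destruct (Hr y Hy) as [x Hx]. exists x; auto. exists t0; tauto. }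
        destruct (choice _ H) as [h Hh]. exists h. split.
        -- intros y Hy. apply (M1 _ (Hh y Hy)).
        -- intros y y' Hy Hy' E. apply (M2 (h y) y y'); auto. rewrite E; auto.
      * exfalso. apply not_all_ex_not in Hd. destruct Hd as [x Hx].
        apply imply_to_and in Hx. destruct Hx as [Xx Nx].
        apply not_all_ex_not in Hr. destruct Hr as [y Hy].
        apply imply_to_and in Hy. destruct Hy as [Yy Ny].
        set (N := fun p => M p \/ p = (x,y)).
        assert (HPN : P N).
        { split; [|split].
          - intros p [Hp|Hp]. auto. subst p. simpl. auto.
          - intros a b b' [H1|H1] [H2|H2].
            + eauto.
            + injection H2; intros; subst. exfalso. apply Nx. eauto.
            + injection H1; intros; subst. exfalso. apply Nx. eauto.
            + injection H1; injection H2; intros; subst. auto.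
          - intros a a' b [H1|H1] [H2|H2].
            + eauto.
            + injection H2; intros; subst. exfalso. apply Ny. eauto.
            + injection H1; intros; subst. exfalso. apply Ny. eauto.
            + injection H1; injection H2; intros; subst. auto. }
        specialize (Mmax N (fun p H => or_introl H) HPN (x,y) (or_intror eq_refl)).
        apply Nx. eauto.
Qed.


Section Hess.
Variable A : Type.
Variable e : nat -> A.
Hypothesis He : forall i j, e i = e j -> i = j.

Definition Bof (G : (A*A)*A -> Prop) (x : A) := exists w, G ((x,x),w).

Definition PH (G : (A*A)*A -> Prop) :=
  ((forall t, ~ G t) \/ (forall i j, G ((e i, e j), e (Cantor.to_nat (i,j))))) /\
  (forall x y z, G ((x,y),z) -> Bof G x /\ Bof G y /\ Bof G z) /\
  (forall x y, Bof G x -> Bof G y -> exists z, G ((x,y),z)) /\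
  (forall u z z', G (u,z) -> G (u,z') -> z = z') /\
  (forall u u' z, G (u,z) -> G (u',z) -> u = u').

Definition G0 (t : (A*A)*A) := exists i j, t = ((e i, e j), e (Cantor.to_nat (i,j))).

Lemma PH_G0 : PH G0.
Proof.
  split; [|split; [|split; [|split]]].
  - right. intros i j. exists i, j. reflexivity.
  - intros x y z [i [j E]]. injection E; intros; subst.
    repeat split; [exists (e (Cantor.to_nat (i,i))); exists i, i; auto
                  |exists (e (Cantor.to_nat (j,j))); exists j, j; auto
                  |set (k := Cantor.to_nat (i,j)); exists (e (Cantor.to_nat (k,k))); exists k, k; auto].
  - intros x y [w [i [i' E]]] [w' [j [j' E']]]. injection E as E1 E2 E3.
    injection E' as F1 F2 F3. subst x y.
    exists (e (Cantor.to_nat (i,j))). exists i, j. reflexivity.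
  - intros u z z' [i1 [j1 E]] [i2 [j2 E']]. injection E as Eu Ez. injection E' as Eu' Ez'.
    rewrite Eu in Eu'. injection Eu' as E1 E2. apply He in E1. apply He in E2. subst. auto.
  - intros u u' z [i1 [j1 E]] [i2 [j2 E']]. pose proof (f_equal snd E) as Z1. pose proof (f_equal snd E') as Z2.
    pose proof (f_equal fst E) as U1. pose proof (f_equal fst E') as U2.
    cbn [fst snd] in Z1, Z2, U1, U2. rewrite Z1 in Z2.
    apply He, Cantor.to_nat_inj in Z2. injection Z2 as -> ->. congruence.
Qed.

Lemma Bof_mono (G H : (A*A)*A -> Prop) x : (forall t, G t -> H t) -> Bof G x -> Bof H x.
Proof. intros S [w Hw]. exists w; auto. Qed.

Lemma PH_chain : forall F : ((A*A)*A -> Prop) -> Prop, (forall X, F X -> PH X) ->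
     (forall X Y, F X -> F Y -> (forall t, X t -> Y t) \/ (forall t, Y t -> X t)) ->
     PH (fun t => exists2 X, F X & X t).
Proof.
  intros F HF Htot.
  set (U := fun t => exists2 X, F X & X t).
  assert (sub : forall X t, F X -> X t -> U t) by (intros; exists X; auto).
  split; [|split; [|split; [|split]]].
  - destruct (classic (exists X t, F X /\ X t)) as [[X [t [FX Xt]]]|Hn].
    + right. destruct (proj1 (HF X FX)) as [Hemp|Hsup].
      * exfalso; apply (Hemp t Xt).
      * intros i j. apply (sub X); auto.
    + left. intros t [X FX Xt]. apply Hn. eauto.
  - intros x y z [X FX Xt]. destruct (proj1 (proj2 (HF X FX)) x y z Xt) as [H1 [H2 H3]].
    repeat split; apply (Bof_mono X); auto; intros; apply (sub X); auto.
  - intros x y [w [X FX Xw]] [w' [Y FY Yw]].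
    destruct (Htot X Y FX FY) as [S|S].
    + destruct (proj1 (proj2 (proj2 (HF Y FY))) x y) as [z Hz].
      exists w; auto. exists w'; auto. exists z. apply (sub Y); auto.
    + destruct (proj1 (proj2 (proj2 (HF X FX))) x y) as [z Hz].
      exists w; auto. exists w'; auto. exists z. apply (sub X); auto.
  - intros u z z' [X FX Xt] [Y FY Yt].
    destruct (Htot X Y FX FY) as [S|S].
    + apply (proj1 (proj2 (proj2 (proj2 (HF Y FY)))) u); auto.
    + apply (proj1 (proj2 (proj2 (proj2 (HF X FX)))) u); auto.
  - intros u u' z [X FX Xt] [Y FY Yt].
    destruct (Htot X Y FX FY) as [S|S].
    + apply (proj2 (proj2 (proj2 (proj2 (HF Y FY)))) u u' z); auto.
    + apply (proj2 (proj2 (proj2 (proj2 (HF X FX)))) u u' z); auto.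
Qed.

Lemma hessenberg : exists p : A*A -> A, forall u v, p u = p v -> u = v.
Proof.
  destruct (zorn_sets _ PH PH_chain) as [M [HM Mmax]].
  assert (MG0 : forall i j, M ((e i, e j), e (Cantor.to_nat (i,j)))).
  { destruct (proj1 HM) as [Hemp|Hs]; auto.
    intros i j. apply (Mmax G0); [intros t Mt; exfalso; apply (Hemp t Mt) | apply PH_G0 |].
    exists i, j; auto. }
  destruct HM as [_ [M1 [M2 [M3 M4]]]].
  set (B := Bof M).
  assert (Be : forall i, B (e i)).
  { intros i. exists (e (Cantor.to_nat (i,i))). apply MG0. }
  assert (Hg : forall x y, exists z, B x -> B y -> M ((x,y),z)).
  { intros x y. destruct (classic (B x /\ B y)) as [[bx b_y]|Hn].
    - destruct (M2 x y bx b_y) as [z Hz]. exists z; auto.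
    - exists x. intros; exfalso; auto. }
  destruct (choice (fun (p : A*A) z => B (fst p) -> B (snd p) -> M ((fst p, snd p), z))
     (fun p => Hg (fst p) (snd p))) as [g0 Hg0].
  set (g := fun x y => g0 (x,y)).
  assert (gM : forall x y, B x -> B y -> M ((x,y), g x y)).
  { intros x y bx b_y. apply (Hg0 (x,y)); auto. }
  assert (gB : forall x y, B x -> B y -> B (g x y)).
  { intros x y bx b_y. destruct (M1 _ _ _ (gM x y bx b_y)) as [_ [_ H]]. auto. }
  assert (ginj : forall x y x' y', B x -> B y -> B x' -> B y' -> g x y = g x' y' -> x = x' /\ y = y').
  { intros x y x' y' bx b_y bx' by' E.
    pose proof (gM x' y' bx' by') as H2. rewrite <- E in H2.
    assert (H := M4 _ _ _ (gM x y bx b_y) H2). injection H; auto. }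
  set (b0 := e 0). set (b1 := e 1). set (b2 := e 2).
  assert (d01 : b0 <> b1) by (intro E; apply He in E; discriminate).
  assert (d02 : b0 <> b2) by (intro E; apply He in E; discriminate).
  assert (d12 : b1 <> b2) by (intro E; apply He in E; discriminate).
  set (D := fun x => ~ B x).
  destruct (compar D B (e 0)) as [[k [Hk1 Hk2]]|[h [Hh1 Hh2]]].
  - set (j := fun x => if excluded_middle_informative (B x) then g b0 x else g b1 (k x)).
    assert (jB : forall x, B (j x)).
    { intros x. unfold j. destruct (excluded_middle_informative (B x)); apply gB; try apply Be; auto. }
    assert (jinj : forall x y, j x = j y -> x = y).
    { intros x y. unfold j.
      destruct (excluded_middle_informative (B x)) as [bx|bx];
      destruct (excluded_middle_informative (B y)) as [b_y|b_y]; intros E.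
      - apply (proj2 (ginj _ _ _ _ (Be 0) bx (Be 0) b_y E)).
      - exfalso. apply d01. apply (proj1 (ginj _ _ _ _ (Be 0) bx (Be 1) (Hk1 y b_y) E)).
      - exfalso. apply d01. symmetry. apply (proj1 (ginj _ _ _ _ (Be 1) (Hk1 x bx) (Be 0) b_y E)).
      - apply Hk2; auto. apply (proj2 (ginj _ _ _ _ (Be 1) (Hk1 x bx) (Be 1) (Hk1 y b_y) E)). }
    exists (fun p => g (j (fst p)) (j (snd p))).
    intros [x y] [x' y'] E. simpl in E.
    destruct (ginj _ _ _ _ (jB x) (jB y) (jB x') (jB y') E) as [E1 E2].
    apply jinj in E1. apply jinj in E2. subst. auto.
  - exfalso.
    set (C := fun x => exists b, B b /\ h b = x).
    assert (CD : forall x, C x -> ~ B x).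
    { intros x [b [bb E]]. subst. apply Hh1; auto. }
    assert (Hhi : forall x, exists b, C x -> B b /\ h b = x).
    { intros x. destruct (classic (C x)) as [[b Hb]|Hn]. exists b; auto. exists x; tauto. }
    destruct (choice _ Hhi) as [hi Hhi'].
    set (pr := fun x => if excluded_middle_informative (B x) then x else hi x).
    assert (prB : forall x, B x \/ C x -> B (pr x)).
    { intros x Hx. unfold pr. destruct (excluded_middle_informative (B x)); auto.
      destruct Hx as [Hx|Hx]. contradiction. apply (Hhi' x Hx). }
    set (tg := fun x y => if excluded_middle_informative (B x) then b0 else
                 if excluded_middle_informative (B y) then b1 else b2).
    assert (tgB : forall x y, B (tg x y)).
    { intros x y. unfold tg. destruct (excluded_middle_informative (B x)); [apply Be|].
      destruct (excluded_middle_informative (B y)); apply Be. }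
    set (Fn := fun x y => h (g (tg x y) (g (pr x) (pr y)))).
    assert (FnC : forall x y, B x \/ C x -> B y \/ C y -> C (Fn x y)).
    { intros x y Hx Hy. exists (g (tg x y) (g (pr x) (pr y))). split; [|reflexivity].
      apply gB; [auto|apply gB; auto]. }
    assert (Fninj : forall x y x' y', B x \/ C x -> B y \/ C y -> ~ (B x /\ B y) ->
       B x' \/ C x' -> B y' \/ C y' -> ~ (B x' /\ B y') -> Fn x y = Fn x' y' -> x = x' /\ y = y').
    { intros x y x' y' Hx Hy Nxy Hx' Hy' Nxy' E. unfold Fn in E.
      apply Hh2 in E; [| apply gB; auto; apply gB; auto; apply prB; auto
                       | apply gB; auto; apply gB; auto; apply prB; auto].
      apply ginj in E; [|auto|apply gB; apply prB; auto|auto|apply gB; apply prB; auto].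
      destruct E as [Et Ep].
      apply ginj in Ep; try (apply prB; auto). destruct Ep as [Ex Ey].
      assert (Hsame : forall a a', B a \/ C a -> B a' \/ C a' -> (B a <-> B a') -> pr a = pr a' -> a = a').
      { intros a a' Ha Ha' Iff Ep. unfold pr in Ep.
        destruct (excluded_middle_informative (B a)) as [ba|ba];
        destruct (excluded_middle_informative (B a')) as [ba'|ba']; try tauto.
        destruct Ha as [Ha|Ha]; [contradiction|]. destruct Ha' as [Ha'|Ha']; [contradiction|].
        destruct (Hhi' a Ha) as [_ E1]. destruct (Hhi' a' Ha') as [_ E2].
        rewrite <- E1, <- E2, Ep. auto. }
      unfold tg in Et.
      destruct (excluded_middle_informative (B x)) as [bx|bx];
      destruct (excluded_middle_informative (B x')) as [bx'|bx'];
      destruct (excluded_middle_informative (B y)) as [b_y|b_y];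
      destruct (excluded_middle_informative (B y')) as [by'|by'];
      try (exfalso; tauto); try (exfalso; congruence);
      split; apply Hsame; auto; tauto. }
    set (N := fun t => M t \/ exists x y, t = ((x,y), Fn x y) /\ (B x \/ C x) /\ (B y \/ C y) /\ ~ (B x /\ B y)).
    assert (BN : forall x, Bof N x <-> B x \/ C x).
    { intros x. split.
      - intros [w [Hw|[x1 [y1 [E [H1 [H2 H3]]]]]]].
        + left. exists w; auto.
        + injection E; intros; subst. auto.
      - intros [bx|cx].
        + destruct bx as [w Hw]. exists w. left; auto.
        + exists (Fn x x). right. exists x, x. repeat split; auto.
          intros [bx _]. apply (CD x cx bx). }
    assert (PN : PH N).
    { split; [|split; [|split; [|split]]].
      - right. intros i j. left. apply MG0.
      - intros x y z [Hm|[x1 [y1 [E [H1 [H2 H3]]]]]].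
        + destruct (M1 _ _ _ Hm) as [bx [b_y bz]].
          repeat split; apply BN; left; auto.
        + injection E; intros; subst. repeat split; apply BN; auto.
      - intros x y Hx Hy. apply BN in Hx. apply BN in Hy.
        destruct (classic (B x /\ B y)) as [[bx b_y]|Hn].
        + destruct (M2 x y bx b_y) as [z Hz]. exists z. left; auto.
        + exists (Fn x y). right. exists x, y. auto.
      - intros u z z' [Hm|[x1 [y1 [E [H1 [H2 H3]]]]]] [Hm'|[x2 [y2 [E' [H1' [H2' H3']]]]]].
        + eauto.
        + injection E'; intros; subst. destruct (M1 _ _ _ Hm) as [bx [b_y _]]. tauto.
        + injection E; intros; subst. destruct (M1 _ _ _ Hm') as [bx [b_y _]]. tauto.
        + injection E as Eu Ez. injection E' as Eu' Ez'. rewrite Ez, Ez'.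
          rewrite Eu in Eu'. injection Eu' as -> ->. reflexivity.
      - intros u u' z [Hm|[x1 [y1 [E [H1 [H2 H3]]]]]] [Hm'|[x2 [y2 [E' [H1' [H2' H3']]]]]].
        + eauto.
        + injection E' as Eu' Ez'. subst z. destruct u as [ux uy].
          destruct (M1 _ _ _ Hm) as [_ [_ bz]].
          exfalso. apply (CD _ (FnC x2 y2 H1' H2') bz).
        + injection E as Eu Ez. subst z. destruct u' as [ux uy].
          destruct (M1 _ _ _ Hm') as [_ [_ bz]].
          exfalso. apply (CD _ (FnC x1 y1 H1 H2) bz).
        + injection E; injection E'; intros; subst.
          destruct (Fninj x1 y1 x2 y2 H1 H2 H3 H1' H2' H3') as [Ex Ey]; auto. subst; auto. }
    assert (Cn : C (h b0)) by (exists b0; split; auto; apply Be).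
    assert (Nt : N ((h b0, h b0), Fn (h b0) (h b0))).
    { right. exists (h b0), (h b0). repeat split; auto. intros [bb _]. apply (CD _ Cn bb). }
    specialize (Mmax N (fun t H => or_introl H) PN _ Nt).
    destruct (M1 _ _ _ Mmax) as [bb _]. apply (CD _ Cn bb).
Qed.
End Hess.


Lemma pre_length {L} (g : nat -> L) k : length (pre g k) = k.
Proof. induction k; simpl; auto. rewrite length_app, IHk. simpl. lia. Qed.

Lemma pre_eq {L} (g h : nat -> L) m : pre g m = pre h m -> forall n, n < m -> g n = h n.
Proof.
  induction m; intros E n Hn. lia. simpl in E. apply app_inj_tail in E. destruct E as [E1 E2].
  destruct (Nat.eq_dec n m). subst; auto. apply IHm; auto. lia.
Qed.

Lemma list_enc (L : Type) (e : nat -> L) (He : forall i j, e i = e j -> i = j)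
  (p : L*L -> L) (Hp : forall u v, p u = p v -> u = v) :
  exists c : list L -> L, forall s t, c s = c t -> s = t.
Proof.
  pose (code := fix code (s : list L) := match s with [] => e 0 | x :: s' => p (x, code s') end).
  exists (fun s => p (e (length s), code s)).
  intros s t H. apply Hp in H. injection H as H1 H2. apply He in H1.
  revert t H1 H2. induction s as [|x s IH]; intros [|y t] H1 H2; simpl in *; try discriminate; auto.
  apply Hp in H2. injection H2 as -> H3. f_equal. apply IH; auto.
Qed.

Lemma in_max {X} (m : X -> nat) (l : list X) x : In x l -> m x <= list_max (map m l).
Proof.
  intros H. assert (H2 : list_max (map m l) <= list_max (map m l)) by lia.
  apply list_max_le in H2. rewrite Forall_forall in H2. apply H2. apply in_map; auto.
Qed.


Section Main.
Set Default Proof Using "All".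
Variables (L K : Type) (ltL : L -> L -> Prop) (ltK : K -> K -> Prop) (f : K -> nat -> L)
  (lam : nat -> L) (I : (nat -> Prop) -> Prop).
Hypothesis Lirr : forall x, ~ ltL x x.
Hypothesis Ltr : forall x y z, ltL x y -> ltL y z -> ltL x z.
Hypothesis Ltot : forall x y, ltL x y \/ x = y \/ ltL y x.
Hypothesis Kirr : forall x, ~ ltK x x.
Hypothesis Ktr : forall x y z, ltK x y -> ltK y z -> ltK x z.
Hypothesis Ktot : forall x y, ltK x y \/ x = y \/ ltK y x.
Hypothesis Kseg : forall x, card_lt (fun y => ltK y x) (full K).
Hypothesis Hlam : forall n, ltL (lam n) (lam (S n)).
Hypothesis Hlamcof : forall x, exists n, ltL x (lam n).
Hypothesis Hlamp : forall n, is_cardinal_elem ltL (lam n) /\ regular_elem ltL (lam n) /\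
               uncountable_elem ltL (lam n).
Hypothesis Hflam : forall a n, ltL (f a n) (lam n).
Hypothesis HI : ideal_on_nat I.
Hypothesis HIfin : forall F, finite_set F -> I F.
Hypothesis Hmono : forall a b, ltK a b -> lt_mod ltL I (f a) (f b).
Hypothesis Hcofin : forall g : nat -> L, (forall n, ltL (g n) (lam n)) ->
       exists a, lt_mod ltL I g (f a).

Lemma I_proper A : (forall n, A n) -> ~ I A.
Proof.
  intros HA H. destruct HI as [[A0 HA0] [_ [_ Hsub]]]. apply HA0. apply (Hsub A); auto.
Qed.

Lemma I_union A B : I A -> I B -> I (fun n => A n \/ B n).
Proof. destruct HI as [_ [_ [Hu _]]]. auto. Qed.

Lemma I_sub A B : I A -> (forall n, B n -> A n) -> I B.
Proof. destruct HI as [_ [_ [_ Hs]]]. eauto. Qed.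

Lemma lam_mono m n : m < n -> ltL (lam m) (lam n).
Proof.
  induction n; intros H. lia. destruct (Nat.eq_dec m n). subst; auto.
  apply Ltr with (lam n); auto. apply IHn. lia.
Qed.

Lemma lam_le m n : m <= n -> forall x, ltL x (lam m) -> ltL x (lam n).
Proof.
  intros H x Hx. destruct (Nat.eq_dec m n). subst; auto. apply Ltr with (lam m); auto.
  apply lam_mono. lia.
Qed.

Lemma asym x y : ltL x y -> ~ ltL y x.
Proof. intros H1 H2. apply (Lirr x). eauto. Qed.

Lemma f_inj a b : f a = f b -> a = b.
Proof.
  intros E. destruct (Ktot a b) as [H|[H|H]]; auto; exfalso.
  - apply Hmono in H. unfold lt_mod in H. rewrite E in H. apply (I_proper _ (fun n => Lirr _) H).
  - apply Hmono in H. unfold lt_mod in H. rewrite E in H. apply (I_proper _ (fun n => Lirr _) H).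
Qed.

Lemma tops_equi (k0 : K) : equipotent (tops_of f) (full K).
Proof.
  assert (H : forall t, exists a, tops_of f t -> t = inr (f a)).
  { intros t. destruct (classic (tops_of f t)) as [[a Ha]|Hn]. exists a; auto. exists k0; tauto. }
  destruct (choice _ H) as [F HF].
  exists F. split; [|split].
  - intros; exact Logic.I.
  - intros x y Hx Hy E. rewrite (HF x Hx), (HF y Hy), E. auto.
  - intros a _. exists (inr (f a)). split. exists a; auto.
    symmetry. apply f_inj. assert (H2 := HF (inr (f a)) (ex_intro _ a eq_refl)).
    injection H2; auto.
Qed.

Lemma seg_nonempty n : exists x, ltL x (lam n).
Proof.
  destruct (Hlamp n) as [_ [[Hinf _] _]]. apply NNPP. intro Hn. apply Hinf.
  exists []. intros x Hx. apply Hn. exists x; auto.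
Qed.

Definition cof n := forall x, ltL x (lam n) -> exists a, f a n = x \/ ltL x (f a n).

Lemma V_cofinal N : exists n, N <= n /\ cof n.
Proof.
  apply NNPP. intro Hn.
  assert (Hb : forall n, exists y, ltL y (lam n) /\ (N <= n -> forall a, ltL (f a n) y)).
  { intro n. destruct (le_lt_dec N n) as [Hle|Hlt].
    - assert (Hc : ~ cof n) by (intro Hc; apply Hn; exists n; auto).
      unfold cof in Hc. apply not_all_ex_not in Hc. destruct Hc as [x Hx].
      apply imply_to_and in Hx. destruct Hx as [Hx1 Hx2].
      exists x. split; auto. intros _ a.
      destruct (Ltot (f a n) x) as [H|[H|H]]; auto; exfalso; apply Hx2; exists a; auto.
    - destruct (seg_nonempty n) as [y Hy]. exists y. split; auto. intros; lia. }
  destruct (choice _ Hb) as [g Hg].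
  destruct (Hcofin g) as [a Ha]. intro n; apply Hg.
  assert (Hfin : I (fun n => n < N)).
  { apply HIfin. exists (seq 0 N). intros n Hn'. apply in_seq. lia. }
  apply (I_proper (fun n => n < N \/ ~ ltL (g n) (f a n))).
  - intros n. destruct (le_lt_dec N n) as [Hle|Hlt]; auto. right.
    apply asym. apply (proj2 (Hg n) Hle).
  - apply I_union; auto.
Qed.

Lemma L_le_fp (l0 : L) : card_le (full L) (finite_part f).
Proof.
  assert (Hi : forall n, exists h : L -> L, cof n ->
     (forall x, ltL x (lam n) -> exists a, f a n = h x) /\
     (forall x y, ltL x (lam n) -> ltL y (lam n) -> h x = h y -> x = y)).
  { intros n. destruct (classic (cof n)) as [Hc|Hc]; [|exists (fun x => x); tauto].
    destruct (Hlamp n) as [_ [[_ Hreg] _]].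
    assert (Heq : equipotent (fun v => exists a, f a n = v) (segment ltL (lam n))).
    { apply Hreg.
      - intros s [a Ha]. subst. auto.
      - intros x Hx. destruct (Hc x Hx) as [a Ha]. exists (f a n). split. exists a; auto.
        destruct Ha; auto. }
    destruct (equi_ge _ _ l0 Heq) as [h [Hh1 Hh2]].
    exists h. intros _. split.
    - intros x Hx. destruct (Hh1 x Hx) as [a Ha]. exists a; auto.
    - intros x y Hx Hy. apply Hh2; auto. }
  destruct (choice _ Hi) as [io Hio].
  assert (Hn : forall x, exists n, ltL x (lam n) /\ cof n).
  { intros x. destruct (Hlamcof x) as [m Hm]. destruct (V_cofinal m) as [n [Hmn Hc]].
    exists n. split; auto. apply (lam_le m); auto. }
  destruct (choice _ Hn) as [nx Hnx].
  assert (Ha : forall x, exists a, f a (nx x) = io (nx x) x).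
  { intros x. destruct (Hnx x) as [H1 H2]. apply (proj1 (Hio _ H2) x H1). }
  destruct (choice _ Ha) as [ax Hax].
  exists (fun x => inl (pre (f (ax x)) (S (nx x)))). split.
  - intros x _. split.
    + right. exists (ax x). unfold tlt. rewrite pre_length. reflexivity.
    + eexists; reflexivity.
  - intros x y _ _ E.
    assert (El : S (nx x) = S (nx y)).
    { rewrite <- (pre_length (f (ax x)) (S (nx x))), <- (pre_length (f (ax y)) (S (nx y))).
      congruence. }
    injection El as El. injection E as E.
    simpl in E. rewrite El in E. apply app_inj_tail in E. destruct E as [_ E].
    pose proof (Hax x) as Ax. pose proof (Hax y) as Ay. rewrite El in Ax. rewrite Ax, Ay in E.
    destruct (Hnx x) as [Hx1 Hx2]. destruct (Hnx y) as [Hy1 Hy2]. rewrite El in Hx1, Hx2.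
    apply (proj2 (Hio _ Hx2)); auto.
Qed.

Lemma fp_le_L (e : nat -> L) (He : forall i j, e i = e j -> i = j) :
  card_le (finite_part f) (full L).
Proof.
  destruct (hessenberg L e He) as [p Hp].
  destruct (list_enc L e He p Hp) as [c Hc].
  exists (fun t => c (match t with inl s => s | inr _ => [] end)). split.
  - intros; exact Logic.I.
  - intros x y [_ [s Hs]] [_ [s' Hs']] E. subst. f_equal. apply Hc; auto.
Qed.

Lemma neigh_inf (G : node L -> node L -> Prop) (HG : T_graph (downclosure f) G) :
  forall b, tops_of f b ->
    ~ finite_set (fun a => finite_part f a /\ (finite_part f a /\ tops_of f b /\ G a b)).
Proof.
  intros b [a0 Hb] [l Hl]. subst b.
  set (mlen := fun t : node L => match t with inl s => length s | inr _ => 0 end).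
  set (k := S (list_max (map mlen l))).
  destruct HG as [_ [_ [_ HG4]]].
  destruct (HG4 (inr (f a0)) (or_introl (ex_intro _ a0 eq_refl)) (inl (pre (f a0) k))) as [u [Hu1 [Hu2 Hu3]]].
  { unfold tlt. rewrite pre_length. reflexivity. }
  destruct u as [s'|g']; [|simpl in Hu2; contradiction].
  assert (Hin : In (inl s') l).
  { apply Hl. assert (FP : finite_part f (inl s')).
    { split. right. exists a0. auto. eexists; reflexivity. }
    split; auto. split; auto. split; auto. exists a0; auto. }
  apply in_max with (m := mlen) in Hin. simpl in Hin.
  assert (k <= length s').
  { destruct Hu1 as [Hu1|Hu1].
    - assert (Es : s' = pre (f a0) k) by congruence. rewrite Es, pre_length. lia.
    - destruct Hu1 as [w [_ Hw]]. subst s'. rewrite length_app, pre_length. lia. }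
  unfold k in H. lia.
Qed.

Lemma no_sub (G : node L -> node L -> Prop)
  (HG3 : forall u v, G u v -> tlt u v \/ tlt v u) (l0 : L) :
  ~ has_aleph0_kappa_subgraph (full K) (finite_part f) (tops_of f)
         (fun a b => finite_part f a /\ tops_of f b /\ G a b).
Proof.
  intros [C [D [E' [HC [HD [HE' [HCG1 [HCeq [HDeq HDinf]]]]]]]]].
  destruct HCeq as [phi [_ [Hphi _]]].
  set (Sn := fun n x => exists s a', C (inl s) /\ s = pre (f a') (length s) /\ n < length s /\ x = f a' n).
  assert (Hbd : forall n, exists y, ltL y (lam n) /\ forall x, Sn n x -> ltL x y).
  { intros n. apply NNPP. intro Hn.
    destruct (Hlamp n) as [_ [[_ Hreg] Hunc]]. apply Hunc.
    assert (Heq : equipotent (Sn n) (segment ltL (lam n))).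
    { apply Hreg.
      - intros x [s [a' [_ [_ [_ ->]]]]]. auto.
      - intros x Hx. apply NNPP. intro H2. apply Hn. exists x. split; auto.
        intros z Hz. destruct (Ltot z x) as [H|[H|H]]; auto; exfalso; apply H2; exists z; auto. }
    apply card_le_trans with (Sn n). apply (equi_ge _ _ l0 Heq).
    assert (Hs : forall x, exists s, Sn n x -> exists a', C (inl s) /\ s = pre (f a') (length s) /\ n < length s /\ x = f a' n).
    { intros x. destruct (classic (Sn n x)) as [[s Hs]|Hs]. exists s; auto. exists []; tauto. }
    destruct (choice _ Hs) as [sig Hsig].
    exists (fun x => phi (inl (sig x))). split. intros; exact Logic.I.
    intros x y Hx Hy E.
    destruct (Hsig x Hx) as [a1 [C1 [P1 [N1 X1]]]]. destruct (Hsig y Hy) as [a2 [C2 [P2 [N2 X2]]]].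
    apply Hphi in E; auto. injection E as E. rewrite X1, X2.
    rewrite E in P1, N1.
    assert (P3 : pre (f a1) (length (sig y)) = pre (f a2) (length (sig y))) by congruence.
    apply (pre_eq _ _ _ P3). auto. }
  destruct (choice _ Hbd) as [g Hg].
  destruct (Hcofin g) as [al Hal]. intro n; apply Hg.
  assert (Hb : exists b, D b /\ exists be, b = inr (f be) /\ (be = al \/ ltK al be)).
  { apply NNPP. intro Hn.
    assert (Hs : forall b, exists be, D b -> b = inr (f be) /\ ltK be al).
    { intros b. destruct (classic (D b)) as [Db|Db]; [|exists al; tauto].
      destruct (HD b Db) as [be Hbe]. exists be. intros _. split; auto.
      destruct (Ktot be al) as [H|[H|H]]; auto; exfalso; apply Hn; exists b; split; auto;
      exists be; auto. }
    destruct (choice _ Hs) as [bf Hbf].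
    destruct (Kseg al) as [_ Hnle]. apply Hnle.
    apply card_le_trans with D. apply (equi_ge _ _ (inl []) HDeq).
    exists bf. split. intros b Db. apply (Hbf b Db).
    intros x y Hx Hy E. rewrite (proj1 (Hbf x Hx)), (proj1 (Hbf y Hy)), E. auto. }
  destruct Hb as [b [Db [be [Hbe Hbeal]]]].
  assert (Hlt : lt_mod ltL I g (f be)).
  { destruct Hbeal as [->|Hab]; auto.
    apply I_sub with (fun n => ~ ltL (g n) (f al n) \/ ~ ltL (f al n) (f be n)).
    apply I_union; auto. apply Hmono; auto.
    intros n Hn. destruct (classic (ltL (g n) (f al n))); auto. right. intro; apply Hn; eauto. }
  assert (Hall : forall n, ltL (f be n) (g n)).
  { intros n. apply NNPP. intro Hnot. apply (HDinf b Db).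
    exists (map (fun k => inl (pre (f be) k)) (seq 0 (S n))).
    intros a [Ca Ea]. destruct (HE' a b Ea) as [[_ [s Hs]] [_ Gab]]. subst a.
    assert (Ps : s = pre (f be) (length s)).
    { subst b. destruct (HG3 _ _ Gab) as [H|H]; simpl in H; [auto|contradiction]. }
    destruct (le_lt_dec (length s) n) as [Hle|Hgt].
    - apply in_map_iff. exists (length s). split. rewrite <- Ps; auto. apply in_seq. lia.
    - exfalso. apply Hnot. apply (proj2 (Hg n)). exists s, be. auto. }
  apply (I_proper _ (fun n => asym _ _ (Hall n)) Hlt).
Qed.

End Main.

Theorem proposition7p4
  (L K : Type) (ltL : L -> L -> Prop) (ltK : K -> K -> Prop)
  (HL : is_cardinal_type ltL) (Hsing : singular_type ltL)
  (Hcof : countable_cofinality ltL)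
  (HK : is_cardinal_type ltK) (Hreg : regular_type ltK)
  (HLK : card_lt (full L) (full K))
  (f : K -> nat -> L) (Hscale : kappa_scale ltL ltK f)
  (G : node L -> node L -> Prop) (HG : T_graph (downclosure f) G) :
  card_graph (full L) (full K) (finite_part f) (tops_of f)
    (fun a b => finite_part f a /\ tops_of f b /\ G a b)
  /\ ~ has_aleph0_kappa_subgraph (full K) (finite_part f) (tops_of f)
         (fun a b => finite_part f a /\ tops_of f b /\ G a b).
Proof.
  destruct Hscale as [lam [I [Hlam [Hlamcof [Hlamp [Hflam [HI [HIfin [Hmono Hcofin]]]]]]]]].
  destruct HL as [[Lirr [Ltr [Ltot _]]] _].
  destruct HK as [[Kirr [Ktr [Ktot _]]] Kseg].
  set (l0 := lam 0).
  assert (Hk0 : exists k : K, True).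
  { apply NNPP. intro Hn. apply (proj1 Hreg). exists []. intros x _. apply Hn. exists x; auto. }
  destruct Hk0 as [k0 _].
  destruct (proj1 Hcof) as [S [_ HS]].
  destruct (equi_ge _ _ l0 HS) as [e [_ He]].
  assert (He' : forall i j, e i = e j -> i = j) by (intros; apply He; auto; exact Logic.I).
  split.
  - split; [|split; [|split]].
    + intros a b H; tauto.
    + apply CB.
      * apply (fp_le_L L K ltL ltK f lam I Lirr Ltr Ltot Kirr Ktr Ktot Kseg Hlam Hlamcof Hlamp
                 Hflam HI HIfin Hmono Hcofin e He').
      * apply (L_le_fp L K ltL ltK f lam I Lirr Ltr Ltot Kirr Ktr Ktot Kseg Hlam Hlamcof Hlamp
                 Hflam HI HIfin Hmono Hcofin l0).
    + apply (tops_equi L K ltL ltK f lam I Lirr Ltr Ltot Kirr Ktr Ktot Kseg Hlam Hlamcof Hlamp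
                 Hflam HI HIfin Hmono Hcofin k0).
    + apply (neigh_inf L K ltL ltK f lam I Lirr Ltr Ltot Kirr Ktr Ktot Kseg Hlam Hlamcof Hlamp
                 Hflam HI HIfin Hmono Hcofin G HG).
  - apply (no_sub L K ltL ltK f lam I Lirr Ltr Ltot Kirr Ktr Ktot Kseg Hlam Hlamcof Hlamp
                 Hflam HI HIfin Hmono Hcofin G (proj1 (proj2 (proj2 HG))) l0).
Qed.
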